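(* Let $\lambda$ be a nonzero real number. For all integers $m,n\ge 0$, $$\binom{n+m}{n}H_{n+m,\lambda}=\sum_{l=0}^{n}H_{l,\lambda}\binom{m+n-l-1}{n-l}+H_{m,\lambda}\binom{m+n-\lambda}{n},$$ where $H_{j,\lambda}$ denotes the $j$-th degenerate harmonic number.
   Context: For nonzero real $\lambda$, the degenerate harmonic numbers are defined by $H_{0,\lambda}=0$ and, for $j\ge 1$, $$H_{j,\lambda}=\frac{1}{\lambda}\sum_{k=1}^{j}\binom{\lambda}{k}(-1)^{k-1}=\sum_{k=1}^{j}\binom{\lambda-1}{k-1}\frac{(-1)^{k-1}}{k}.$$ Equivalently, $\frac{1}{1-t}\log_{-\lambda}\!\left(\frac{1}{1-t}\right)=\sum_{j\ge1}H_{j,\lambda}t^j$, where $\log_{\mu}(t)=\frac{1}{\mu}(t^{\mu}-1)$. Binomial coefficients are the generalized ones: for any real $a$ and integer $j\ge 0$, $\binom{a}{j}=\frac{a(a-1)\cdots(a-j+1)}{j!}$, with $\binom{a}{0}=1$; in particular $\binom{-1}{0}=1$. *)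

(* Defs.v *)
From mathcomp Require Import all_boot all_order all_algebra.
Set Implicit Arguments. Unset Strict Implicit. Unset Printing Implicit Defensive.
Import Order.TTheory GRing.Theory Num.Theory.
Local Open Scope ring_scope.

Definition gbinom {R : realFieldType} (a : R) (j : nat) : R :=
  (\prod_(i < j) (a - i%:R)) / (j`!)%:R.

Definition degH {R : realFieldType} (lam : R) (j : nat) : R :=
  lam^-1 * \sum_(1 <= k < j.+1) gbinom lam k * (-1) ^+ k.-1.

(* Main.v *)
Require Import Defs.
From mathcomp Require Import all_boot all_order all_algebra.
From mathcomp Require Import ring.
Import Order.TTheory GRing.Theory Num.Theory.
Local Open Scope ring_scope.

Section S.
Variable R : realFieldType.
Implicit Types (x y a b : R).

Lemma natS_neq0 k : (k.+1%:R : R) != 0.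
Proof. by rewrite pnatr_eq0. Qed.

Lemma fact_neq0 k : ((k`!)%:R : R) != 0.
Proof. by rewrite pnatr_eq0 -lt0n fact_gt0. Qed.

Lemma gbinom0 x : gbinom x 0 = 1.
Proof. by rewrite /gbinom big_ord0 fact0 divr1. Qed.

Lemma gbinom_mulS x k : gbinom x k.+1 * k.+1%:R = gbinom x k * (x - k%:R).
Proof.
rewrite /gbinom big_ord_recr /= factS natrM.
have h1 := natS_neq0 k; have h2 := fact_neq0 k.
field; by rewrite ?h2 //= addrC natr1 pnatr_eq0.
Qed.

Lemma gbinom_abs y k : gbinom (y + 1) k.+1 * k.+1%:R = (y + 1) * gbinom y k.
Proof.
rewrite /gbinom big_ord_recl /= factS natrM subr0.
have -> : \prod_(i < k) (y + 1 - (lift ord0 i)%:R) = \prod_(i < k) (y - i%:R).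
  apply: eq_bigr => i _; rewrite /= /bump /= add1n -natr1; ring.
have h1 := natS_neq0 k; have h2 := fact_neq0 k.
field; by rewrite ?h2 //= addrC natr1 pnatr_eq0.
Qed.

Lemma ratio_ind (f g r : nat -> R) : f 0%N = g 0%N ->
  (forall j, f j.+1 * j.+1%:R = r j * f j) ->
  (forall j, g j.+1 * j.+1%:R = r j * g j) -> forall j, f j = g j.
Proof.
move=> h0 hf hg; elim=> // j IH.
apply: (mulIf (natS_neq0 j)); by rewrite hf hg IH.
Qed.

Definition cc a l := gbinom (a + l%:R) l.

Lemma cc0 a : cc a 0 = 1.
Proof. exact: gbinom0. Qed.

Lemma cc_S a l : cc a l.+1 * l.+1%:R = (a + l%:R + 1) * cc a l.
Proof. by rewrite /cc (_ : a + l.+1%:R = a + l%:R + 1) ?gbinom_abs // -natr1 addrA. Qed.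

Lemma gbinom_pascal y j : gbinom (y + 1) j.+1 = gbinom y j.+1 + gbinom y j.
Proof.
apply: (mulIf (natS_neq0 j)).
rewrite /= mulrDl. rewrite gbinom_abs gbinom_mulS -natr1; ring.
Qed.

Lemma gbinom_L y n : gbinom (y + 1) n * (y + 1 - n%:R) = (y + 1) * gbinom y n.
Proof. by rewrite -gbinom_mulS gbinom_abs. Qed.

Lemma cc_zero l : cc 0 l = 1.
Proof.
apply: (ratio_ind (cc 0) (fun _ => 1) (fun j => j.+1%:R)) => [|j|j]; rewrite ?cc0 //.
- by rewrite cc_S add0r natr1.
- by rewrite mul1r mulr1.
Qed.

Lemma gbinom_neg lam k : gbinom lam k * (-1) ^+ k = cc (- lam - 1) k.
Proof.
apply: (ratio_ind (fun k => gbinom lam k * (-1) ^+ k) (cc (- lam - 1))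
   (fun j => j%:R - lam)) => [|j|j].
- by rewrite gbinom0 cc0 mulr1.
- rewrite exprS mulrAC gbinom_mulS; ring.
- rewrite cc_S; ring.
Qed.


Lemma vand_step a b j :
  (\sum_(l < j.+2) cc a l * cc b (j.+1 - l)) * j.+1%:R =
  (a + b + j%:R + 2) * \sum_(l < j.+1) cc a l * cc b (j - l).
Proof.
rewrite mulr_suml.
have -> : \sum_(i < j.+2) cc a i * cc b (j.+1 - i) * j.+1%:R =
  \sum_(i < j.+2) (cc a i * i%:R) * cc b (j.+1 - i) +
  \sum_(i < j.+2) cc a i * (cc b (j.+1 - i) * (j.+1 - i)%:R).
  rewrite -big_split; apply: eq_bigr => i _ /=.
  have -> : (j.+1)%:R = i%:R + (j.+1 - i)%:R :> R.
    by rewrite -natrD subnKC // -ltnS.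
  ring.
rewrite big_ord_recl /= mulr0 mul0r add0r.
rewrite [\sum_(i < j.+2) _]big_ord_recr /= subnn mulr0 mulr0 addr0.
rewrite mulr_sumr -big_split; apply: eq_bigr => i _ /=.
have hi : (i <= j)%N by rewrite -ltnS.
have -> : bump 0 i = i.+1 by [].
rewrite subSS cc_S subSn // cc_S natrB //. ring.
Qed.

Lemma vand a b n :
  \sum_(l < n.+1) cc a l * cc b (n - l) = cc (a + b + 1) n.
Proof.
apply: (ratio_ind (fun n => \sum_(l < n.+1) cc a l * cc b (n - l))
  (cc (a + b + 1)) (fun j => a + b + j%:R + 2)) => [|j|j].
- by rewrite big_ord1 !cc0 mulr1.
- exact: vand_step.
- rewrite cc_S; ring.
Qed.

Lemma degH_closed lam j : lam != 0 -> lam * degH lam j = 1 - cc (- lam) j.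
Proof.
move=> hl; elim: j => [|j IH].
  by rewrite /degH big_geq // !mulr0 cc0 subrr.
have -> : degH lam j.+1 = degH lam j + lam^-1 * (gbinom lam j.+1 * (-1) ^+ j).
  by rewrite /degH big_nat_recr //= mulrDr.
rewrite mulrDr IH mulrA divff // mul1r.
have N := gbinom_neg lam j.+1.
have e1 : - lam + j.+1%:R = (- lam + j%:R) + 1 by rewrite -natr1; ring.
have e2 : - lam - 1 + j.+1%:R = - lam + j%:R by rewrite -natr1; ring.
have P : cc (- lam) j.+1 = cc (- lam - 1) j.+1 + cc (- lam) j.
  by rewrite /cc e1 e2 gbinom_pascal.
rewrite P -N exprS; ring.
Qed.

Lemma prod_id x n m : gbinom ((n + m)%:R) n * gbinom x (n + m) =
  gbinom x n * gbinom (x - n%:R) m.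
Proof.
apply: (ratio_ind (fun m => gbinom ((n + m)%:R) n * gbinom x (n + m))
  (fun m => gbinom x n * gbinom (x - n%:R) m) (fun j => x - n%:R - j%:R)) => [|j|j].
- have : cc 0 n = 1 := cc_zero n.
  rewrite /cc add0r addn0 => ->; rewrite gbinom0; ring.
- apply: (mulIf (natS_neq0 (n + j))).
  rewrite addnS.
  have A := gbinom_mulS x (n + j).
  have B := gbinom_L ((n + j)%:R) n. rewrite natr1 in B.
  have e : (n + j).+1%:R - n%:R = j.+1%:R :> R.
    by rewrite -natrB ?leqW ?leq_addr // -addnS addKn.
  rewrite e in B.
  transitivity ((gbinom (n + j).+1%:R n * j.+1%:R) *
     (gbinom x (n + j).+1 * (n + j).+1%:R)); first ring.
  rewrite B A -natr1 natrD; ring.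
- rewrite -mulrA gbinom_mulS; ring.
Qed.

End S.
Arguments cc {R}.

Theorem theorem2p3 (R : realFieldType) (lam : R) (hlam : lam != 0) (m n : nat) :
  gbinom ((n + m)%:R : R) n * degH lam (n + m) =
  \sum_(0 <= l < n.+1)
      degH lam l * gbinom ((m + n)%:R - l%:R - 1 : R) (n - l)
  + degH lam m * gbinom ((m + n)%:R - lam) n.
Proof.
apply: (mulfI hlam).
rewrite mulrCA degH_closed // [X in _ = X]mulrDr; rewrite [lam * (degH lam m * _)]mulrA degH_closed // mulr_sumr big_mkord.
have -> : \sum_(i < n.+1) lam * (degH lam i * gbinom ((m + n)%:R - i%:R - 1) (n - i))
   = \sum_(i < n.+1) cc 0 i * cc (m%:R - 1) (n - i)
     - \sum_(i < n.+1) cc (- lam) i * cc (m%:R - 1) (n - i).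
  rewrite -sumrB; apply: eq_bigr => i _.
  rewrite mulrA degH_closed // cc_zero -mulrBl.
  have hi : (i <= n)%N by rewrite -ltnS.
  congr (_ * _); rewrite /cc natrB // natrD; congr (gbinom _ _); ring.
rewrite !vand mulrBr mulr1 prod_id /cc.
have e1 : 0 + (m%:R - 1) + 1 + n%:R = (n + m)%:R :> R by rewrite natrD; ring.
have e2 : - lam + (m%:R - 1) + 1 + n%:R = (m + n)%:R - lam by rewrite natrD; ring.
have e3 : - lam + (n + m)%:R = (m + n)%:R - lam by rewrite addnC; ring.
have e4 : (m + n)%:R - lam - n%:R = - lam + m%:R :> R by rewrite natrD; ring.
rewrite e1 e2 e3 e4; ring.
Qed.
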